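(* Let $k\ge 1$, $0\le r<k$ and $n\ge 1$ be integers, and let $$A_n(k,r,x)=\left(\binom{i-k+1+r}{j}x^k+\binom{i+1+r}{j+1}\right)_{i,j=0}^{n-1}.$$ Then $x^r\det A_n(k,r,x)=F^{(k)}_{kn+r}(x)$.
   Context: Binomial coefficients are the generalized ones: for an integer $m$ (possibly negative) and an integer $j$, $\binom{m}{j}=\frac{m(m-1)\cdots(m-j+1)}{j!}$ if $j\ge 0$ and $\binom{m}{j}=0$ if $j<0$. For an integer $k\ge1$, the generalized Fibonacci polynomials $F^{(k)}_n(x)\in\mathbb{Z}[x]$ ($n\ge0$) are defined by $F^{(k)}_n(x)=x^n$ for $0\le n<k$ and $F^{(k)}_n(x)=xF^{(k)}_{n-1}(x)+F^{(k)}_{n-k}(x)$ for $n\ge k$; equivalently $F^{(k)}_n(x)=\sum_{j=0}^{\lfloor n/k\rfloor}\binom{n-(k-1)j}{j}x^{n-kj}$. *)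

(* Defs.v *)
From HB Require Import structures.
From mathcomp Require Import all_boot all_order all_algebra.
Set Implicit Arguments. Unset Strict Implicit. Unset Printing Implicit Defensive.
Import Order.TTheory GRing.Theory Num.Theory.
Local Open Scope ring_scope.

(* Generalized binomial coefficient binom(m, j) for m : int, j : int:
   m(m-1)...(m-j+1)/j! if j >= 0, and 0 if j < 0.  The division is exact. *)
Definition gbin (m j : int) : int :=
  match j with
  | Posz j' => ((\prod_(l < j') (m - (l : nat)%:Z)) %/ (j'`!)%:Z)%Z
  | Negz _ => 0
  end.

(* F^{(k)}_n(x): x^n for n < k, x F_{n-1} + F_{n-k} for n >= k.
   Defined with fuel; fibF k n.+1 n is enough fuel when k >= 1. *)
Fixpoint fibF (k fuel n : nat) : {poly int} :=
  match fuel with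
  | 0 => 0
  | fuel'.+1 =>
      if (n < k)%N then 'X^n
      else 'X * fibF k fuel' (n - 1)%N + fibF k fuel' (n - k)%N
  end.

Definition Fib (k n : nat) : {poly int} := fibF k n.+1 n.

Definition Amat (k r n : nat) : 'M[{poly int}]_n :=
  \matrix_(i < n, j < n)
    ((gbin (i%:Z - k%:Z + 1 + r%:Z) j)%:P * 'X^k
     + (gbin (i%:Z + 1 + r%:Z) (j%:Z + 1))%:P).

(* Main.v *)
Require Import Defs.
From HB Require Import structures.
From mathcomp Require Import all_boot all_order all_algebra.
From mathcomp Require Import zify ring.
From Corelib Require Import Setoid Morphisms.
Import GRing.Theory.
Local Open Scope ring_scope.

Definition pii (m : int) (j : nat) : int := \prod_(l < j) (m - (l : nat)%:Z).

Lemma pii_S m j : pii (m + 1) j.+1 = pii m j.+1 + (j.+1)%:Z * pii m j.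
Proof.
rewrite /pii big_ord_recl big_ord_recr /=.
under eq_bigr => i _ do rewrite /bump /= add1n -addn1 PoszD opprD addrACA subrr addr0.
rewrite subr0 -[in RHS](addn1 j) PoszD; ring.
Qed.

Lemma int_ind3 (P : int -> Prop) : P 0 -> (forall m, P m -> P (m + 1)) ->
  (forall m, P (m + 1) -> P m) -> forall m, P m.
Proof.
move=> P0 Pu Pd [a|a].
  elim: a => // a IH; rewrite -addn1 PoszD; exact: Pu.
elim: a => [|a IH]; first by apply: Pd; rewrite NegzE addrC subrr.
apply: Pd; rewrite !NegzE -addn1 PoszD opprD addrK; exact: IH.
Qed.

Lemma pii_dvd j m : ((j`!)%:Z %| pii m j)%Z.
Proof.
elim: j m => [|j IH] m; first by rewrite /pii big_ord0 dvdzz.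
have H : forall m, (((j.+1)`!)%:Z %| (j.+1)%:Z * pii m j)%Z.
  by move=> m'; rewrite factS PoszM; apply: dvdz_mul => //; exact: IH.
elim/int_ind3: m.
- by rewrite /pii big_ord_recl /= subr0 mul0r dvdz0.
- by move=> m Hm; rewrite pii_S; apply: rpredD.
- by move=> m Hm; have := Hm; rewrite pii_S => Hm'; rewrite -(addrK ((j.+1)%:Z * pii m j) (pii m j.+1)); apply: rpredB.
Qed.

Lemma gbinE m (j : nat) : gbin m j = (pii m j %/ (j`!)%:Z)%Z.
Proof. by []. Qed.

Lemma gbin0 m : gbin m 0 = 1.
Proof. by rewrite gbinE /pii big_ord0 divz1. Qed.

Lemma gbin0S j : gbin 0 j.+1 = 0.
Proof. by rewrite gbinE /pii big_ord_recl /= subr0 mul0r div0z. Qed.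

Lemma gbin_pascal m (j : nat) : gbin (m + 1) j.+1 = gbin m j.+1 + gbin m j.
Proof.
rewrite !gbinE pii_S divzDl; last exact: pii_dvd.
by rewrite factS PoszM divzMpl.
Qed.
Section Cg.
Variable R : comNzRingType.
Variable N : nat.
Definition cg (p q : {poly R}) := forall j, (j < N)%N -> p`_j = q`_j.

Lemma cg_refl p : cg p p. Proof. by []. Qed.
Lemma cg_sym p q : cg p q -> cg q p. Proof. by move=> H j hj; rewrite H. Qed.
Lemma cg_trans p q s : cg p q -> cg q s -> cg p s.
Proof. by move=> H1 H2 j hj; rewrite H1 ?H2. Qed.

#[global] Instance cg_equiv : Equivalence cg.
Proof. split; [exact: cg_refl | exact: cg_sym | exact: cg_trans]. Qed.

Lemma cgD p q p' q' : cg p q -> cg p' q' -> cg (p + p') (q + q').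
Proof. by move=> H1 H2 j hj; rewrite !coefD H1 ?H2. Qed.
Lemma cgN p q : cg p q -> cg (- p) (- q).
Proof. by move=> H1 j hj; rewrite !coefN H1. Qed.
Lemma cgMr p q s : cg p q -> cg (p * s) (q * s).
Proof.
move=> H j hj; rewrite !coefM; apply: eq_bigr => i _; rewrite H //.
by apply: leq_ltn_trans hj; rewrite -ltnS.
Qed.
Lemma cgM p q p' q' : cg p q -> cg p' q' -> cg (p * p') (q * q').
Proof.
move=> H1 H2; apply: cg_trans (cgMr _ _ p' H1) _.
by rewrite ![q * _]mulrC; apply: cgMr.
Qed.

#[global] Instance cgD_proper : Proper (cg ==> cg ==> cg) (@GRing.add {poly R}).
Proof. by move=> ? ? ? ? ? ?; apply: cgD. Qed.
#[global] Instance cgM_proper : Proper (cg ==> cg ==> cg) (@GRing.mul {poly R}).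
Proof. by move=> ? ? ? ? ? ?; apply: cgM. Qed.
#[global] Instance cgN_proper : Proper (cg ==> cg) (@GRing.opp {poly R}).
Proof. by move=> ? ? ?; apply: cgN. Qed.

Lemma cgX p q m : cg p q -> cg (p ^+ m) (q ^+ m).
Proof. by move=> H; elim: m => [|m IH]; rewrite ?expr0 // !exprS IH H. Qed.

Lemma cg_sum (I : finType) (f g : I -> {poly R}) :
  (forall i, cg (f i) (g i)) -> cg (\sum_i f i) (\sum_i g i).
Proof. by move=> H j hj; rewrite !coef_sum; apply: eq_bigr => i _; rewrite H. Qed.

End Cg.
Arguments cg {R} N p q.
Arguments cg_refl {R N} p.
Arguments cg_sym {R N p q}.
Arguments cg_trans {R N p q s}.
Arguments cgD {R N p q p' q'}.
Arguments cgN {R N p q}.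
Arguments cgMr {R N p q} s.
Arguments cgM {R N p q p' q'}.
Arguments cgX {R N p q} m.


Section Ser.
Variable R : comNzRingType.
Variable N : nat.

Lemma cg_shift (a : nat -> R) :
  cg N ('X * \poly_(m < N) a m) (\poly_(m < N) (if m is m'.+1 then a m' else 0)).
Proof.
move=> j hj; rewrite coefXM !coef_poly hj; case: j hj => //= j hj.
by rewrite ltnW.
Qed.

Lemma coef_exp_low (u : {poly R}) : u`_0 = 0 ->
  forall a j, (j < a)%N -> (u ^+ a)`_j = 0.
Proof.
move=> u0; elim=> [|a IH] j //; rewrite ltnS => hj.
rewrite exprSr coefM big1 // => i _.
have [hi|hi] := ltnP i a; first by rewrite IH // mul0r.
have hij : (i : nat) = j by apply/eqP; rewrite eqn_leq -ltnS ltn_ord (leq_trans hj hi).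
by rewrite hij subnn u0 mulr0.
Qed.

Lemma ser_inv (e : {poly R}) : e`_0 = 1 -> exists g, cg N (g * e) 1.
Proof.
move=> e0; set u := 1 - e.
exists (\sum_(i < N) u ^+ i).
have -> : e = 1 - u by rewrite /u opprB addrC subrK.
have -> : (\sum_(i < N) u ^+ i) * (1 - u) = 1 - u ^+ N.
  rewrite -[RHS]opprB subrX1 -mulNr mulrC; congr (_ * _); rewrite /u; ring.
move=> j hj; rewrite coefB coef_exp_low ?subr0 //.
by rewrite /u coefB coefC /= e0 subrr.
Qed.

End Ser.
Section Mx.
Variable R : comNzRingType.

Definition rowmat {n} (p : 'I_n -> {poly R}) : 'M[R]_n := \matrix_(i, j) (p i)`_j.
Definition Tz n (s : {poly R}) : 'M[R]_n :=
  \matrix_(a, b) (if (a <= b)%N then s`_(b - a) else 0).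
Definition Dm n : 'M[R]_n := \matrix_(i, l) ((-1) ^+ (i - l) *+ 'C(i, l)).

Lemma rowmat_Tz n p s : rowmat p *m Tz n s = rowmat (fun i => p i * s).
Proof.
apply/matrixP => i j; rewrite !mxE coefM.
rewrite (big_ord_widen n (fun l => (p i)`_l * s`_(j - l))) ?ltn_ord // [RHS]big_mkcond.
apply: eq_bigr => a _; rewrite !mxE ltnS; case: ifP => _; by rewrite ?mulr0.
Qed.

Lemma mul_rowmat n (M : 'M[R]_n) p :
  M *m rowmat p = rowmat (fun i => \sum_l (M i l)%:P * p l).
Proof.
apply/matrixP => i j; rewrite !mxE coef_sum; apply: eq_bigr => l _.
by rewrite mxE coefCM.
Qed.

Lemma rowmat_cg n p q : (forall i, cg n (p i) (q i)) -> @rowmat n p = rowmat q.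
Proof. by move=> H; apply/matrixP => i j; rewrite !mxE H. Qed.

Lemma det_Tz n (s : {poly R}) : s`_0 = 1 -> \det (Tz n s) = 1.
Proof.
move=> s0; rewrite -det_tr det_trig.
  by apply: big1 => i _; rewrite !mxE leqnn subnn s0.
apply/forallP => i; apply/forallP => j; apply/implyP => hij.
by rewrite !mxE leqNgt hij.
Qed.

Lemma det_Dm n : \det (Dm n) = 1.
Proof.
rewrite det_trig.
  by apply: big1 => i _; rewrite !mxE subnn binn.
apply/forallP => i; apply/forallP => j; apply/implyP => hij.
by rewrite !mxE bin_small.
Qed.

Lemma det_E n' (g : {poly R}) :
  \det (\matrix_(i, j) (((j.+1 == i)%:R - (i == 0)%:R * g`_j.+1) : R) : 'M_n'.+1)
  = (-1) ^+ n'.+1 * g`_n'.+1.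
Proof.
rewrite (expand_det_col _ ord_max) big_ord_recl big1 ?addr0; last first.
  move=> i _; rewrite !mxE /= eqSS.
  have -> : (n' == i) = false by apply/negbTE; rewrite neq_ltn ltn_ord orbT.
  by rewrite mul0r subrr mul0r.
rewrite /cofactor !mxE /=.
have -> : row' ord0 (col' ord_max (\matrix_(i, j) (((j.+1 == i)%:R - (i == 0)%:R * g`_j.+1) : R) : 'M_n'.+1)) = 1%:M.
  apply/matrixP => i j; rewrite !mxE lift_max /= eqSS mul0r subr0.
  by rewrite eq_sym.
rewrite det1 mulr1 exprS sub0r mul1r !mulNr !mul1r mulrC; done.
Qed.

End Mx.
Arguments rowmat {R n} p.

Lemma fibF_fuel k f1 f2 n : (1 <= k)%N -> (n < f1)%N -> (n < f2)%N ->
  fibF k f1 n = fibF k f2 n.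
Proof.
move=> hk; elim: f1 f2 n => [|f1 IH] [|f2] n //= h1 h2.
case: ifP => // hnk.
rewrite (IH f2) ?(IH f2 (n - k)%N) //; lia.
Qed.

Lemma Fib_small k N : (N < k)%N -> Fib k N = 'X^N.
Proof. by move=> h; rewrite /Fib /= h. Qed.

Lemma Fib_rec k N : (1 <= k)%N -> (k <= N)%N ->
  Fib k N = 'X * Fib k (N - 1) + Fib k (N - k).
Proof.
move=> hk hN; rewrite /Fib [fibF k N.+1 N]/= ltnNge hN /=.
rewrite (fibF_fuel k N (N - 1).+1) ?(fibF_fuel k N (N - k).+1) //; lia.
Qed.

Local Notation R0 := {poly int}.
Local Notation tt := ('X : {poly R0}).
Local Notation xc := (('X : R0)%:P : {poly R0}).

Section FibSer.
Variables (k Nt : nat).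
Hypothesis hk : (1 <= k)%N.

Definition Sr (r : nat) : {poly R0} :=
  \poly_(m < Nt) ((-1) ^+ m * Fib k (k * m + r)).

Lemma cg_eq (p q : {poly R0}) : p = q -> cg Nt p q.
Proof. by move=> ->. Qed.

Lemma SrA r : (1 <= r)%N -> (r < k)%N ->
  cg Nt ((1 + tt) * Sr r) (xc * Sr (r - 1)).
Proof.
move=> h1 h2; rewrite mulrDl mul1r /Sr cg_shift.
move=> j hj; rewrite coefD coefCM !coef_poly hj.
case: j hj => [|j] hj.
  rewrite !muln0 !add0n !Fib_small ?(leq_ltn_trans (leq_subr 1 r)) // addr0 !expr0 !mul1r.
  by rewrite -exprS subn1 prednK.
rewrite [Fib k (k * j.+1 + r)](Fib_rec _ _ hk); last by lia.
have -> : (k * j.+1 + r - 1 = k * j.+1 + (r - 1))%N by lia.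
have -> : (k * j.+1 + r - k = k * j + r)%N by lia.
rewrite exprS; ring.
Qed.

Lemma SrB : cg Nt ((1 + tt) * Sr 0) (1 - xc * tt * Sr (k - 1)).
Proof.
rewrite mulrDl mul1r /Sr cg_shift -mulrA.
move=> j hj; rewrite coefD coefB coef1 coefCM coefXM !coef_poly hj.
case: j hj => [|j] hj /=.
  by rewrite muln0 Fib_small // expr0 !mul1r addr0 mulr0 subr0.
rewrite (ltnW hj) [Fib k (k * j.+1 + 0)](Fib_rec _ _ hk); last by lia.
have -> : (k * j.+1 + 0 - 1 = k * j + (k - 1))%N by lia.
have -> : (k * j.+1 + 0 - k = k * j + 0)%N by lia.
rewrite exprS; ring.
Qed.


Lemma cgMl (s p q : {poly R0}) : cg Nt p q -> cg Nt (s * p) (s * q).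
Proof. by move=> H; apply: cgM. Qed.

Lemma SrC r : (r < k)%N -> cg Nt ((1 + tt) ^+ r * Sr r) (xc ^+ r * Sr 0).
Proof.
elim: r => [|r IH] h; first by rewrite !expr0 !mul1r.
have HA : cg Nt ((1 + tt) * Sr r.+1) (xc * Sr r).
  by have := @SrA r.+1 isT h; rewrite subn1.
have IH' := IH (ltnW h).
apply: (@cg_trans _ _ _ (xc * ((1 + tt) ^+ r * Sr r))).
  rewrite exprSr -mulrA; eapply cg_trans; first (apply: cgMl; exact: HA).
  by apply: cg_eq; rewrite mulrCA.
eapply cg_trans; first (apply: cgMl; exact: IH').
by apply: cg_eq; rewrite exprS mulrA.
Qed.

Definition hh : {poly R0} := (('X : R0) ^+ k)%:P * tt + (1 + tt) ^+ k.

Lemma SrD : cg Nt (Sr 0 * hh) ((1 + tt) ^+ (k - 1)).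
Proof.
have [k' ek] : exists k', k = k'.+1 by exists k.-1; rewrite prednK.
have HC : cg Nt ((1 + tt) ^+ k' * Sr k') (xc ^+ k' * Sr 0) by apply: SrC; rewrite ek.
have H1 : cg Nt ((1 + tt) ^+ k * Sr 0) ((1 + tt) ^+ k' - xc ^+ k * tt * Sr 0).
  rewrite {1}ek exprSr -mulrA; eapply cg_trans; first (apply: cgMl; exact: SrB).
  have -> : (k - 1 = k')%N by rewrite ek subn1.
  apply: (@cg_trans _ _ _ ((1 + tt) ^+ k' - xc * tt * ((1 + tt) ^+ k' * Sr k'))).
    by apply: cg_eq; ring.
  apply: cgD => //; apply: cgN; eapply cg_trans; first (apply: cgMl; exact: HC).
  by apply: cg_eq; rewrite ek exprS; ring.
have -> : (k - 1 = k')%N by rewrite ek subn1.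
apply: (@cg_trans _ _ _ ((('X : R0) ^+ k)%:P * tt * Sr 0 + (1 + tt) ^+ k * Sr 0)).
  by apply: cg_eq; rewrite /hh; ring.
eapply cg_trans; first (apply: cgD; [exact: cg_refl | exact: H1]).
by apply: cg_eq; rewrite rmorphXn; ring.
Qed.

Lemma inv1X : exists v : {poly R0}, cg Nt (v * (1 + tt)) 1.
Proof. by apply: ser_inv; rewrite coefD coef1 coefX addr0. Qed.

Lemma SrE r : (r < k)%N -> cg Nt (Sr r * hh) (xc ^+ r * (1 + tt) ^+ (k - 1 - r)).
Proof.
move=> hr; have [v Hv] := inv1X.
have Hvr := cgX r Hv; rewrite expr1n in Hvr.
have HC := @SrC r hr.
apply: (@cg_trans _ _ _ ((v * (1 + tt)) ^+ r * (Sr r * hh))).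
  apply: cg_sym; eapply cg_trans; first (apply: cgMr; exact: Hvr).
  by apply: cg_eq; rewrite mul1r.
apply: (@cg_trans _ _ _ (v ^+ r * (((1 + tt) ^+ r * Sr r) * hh))).
  by apply: cg_eq; rewrite exprMn; ring.
eapply cg_trans; first (apply: cgMl; apply: cgMr; exact: HC).
apply: (@cg_trans _ _ _ (v ^+ r * xc ^+ r * (Sr 0 * hh))).
  by apply: cg_eq; ring.
eapply cg_trans; first (apply: cgMl; exact: SrD).
have e : (1 + tt) ^+ (k - 1) = (1 + tt) ^+ r * (1 + tt) ^+ (k - 1 - r).
  by rewrite -exprD; congr (_ ^+ _); lia.
apply: (@cg_trans _ _ _ ((v * (1 + tt)) ^+ r * (xc ^+ r * (1 + tt) ^+ (k - 1 - r)))).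
  by apply: cg_eq; rewrite e exprMn; ring.
eapply cg_trans; first (apply: cgMr; exact: Hvr).
by apply: cg_eq; rewrite mul1r.
Qed.

End FibSer.

Lemma cgl {R : comNzRingType} N (s p q : {poly R}) : cg N p q -> cg N (s * p) (s * q).
Proof. by move=> H; apply: cgM. Qed.

Section Gb.
Variable Nt : nat.

Definition PP (m : int) : {poly R0} := \poly_(j < Nt) ((gbin m j)%:P : R0).
Definition QQ (m : int) : {poly R0} := \poly_(j < Nt) ((gbin m (j.+1))%:P : R0).

Lemma PP1 m : cg Nt ((1 + tt) * PP m) (PP (m + 1)).
Proof.
rewrite mulrDl mul1r; eapply cg_trans; first (apply: cgD; [exact: cg_refl | exact: cg_shift]).
move=> j hj; rewrite coefD !coef_poly hj; case: j hj => [|j] hj.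
  by rewrite !gbin0 addr0.
by rewrite gbin_pascal rmorphD.
Qed.

Lemma PPa m (a : nat) : cg Nt ((1 + tt) ^+ a * PP m) (PP (m + a%:Z)).
Proof.
elim: a => [|a IH]; first by rewrite expr0 mul1r addr0.
rewrite exprS -mulrA; eapply cg_trans; first (apply: cgl; exact: IH).
eapply cg_trans; first exact: PP1.
by rewrite -addrA -PoszD addn1.
Qed.

Lemma PP0 : cg Nt (PP 0) 1.
Proof.
move=> j hj; rewrite coef_poly hj coef1; case: j hj => [|j] hj.
  by rewrite gbin0.
by rewrite gbin0S.
Qed.

Lemma QQ1 m : cg Nt (tt * QQ m) (PP m - 1).
Proof.
move=> j hj; rewrite coefXM coefB coef1 !coef_poly hj; case: j hj => [|j] hj.
  by rewrite eqxx gbin0 subrr.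
by rewrite [(j.+1 == 0)%N]/= [(j.+1).-1]/= (ltnW hj) subr0.
Qed.

End Gb.

Lemma sum_binC (S : comNzRingType) n i (F : nat -> S) : (i < n)%N ->
  \sum_(l < n) F l *+ 'C(i, l) = \sum_(l < i.+1) F l *+ 'C(i, l).
Proof.
move=> hi; rewrite [RHS](big_ord_widen n (fun l => F l *+ 'C(i, l))) // [RHS]big_mkcond.
apply: eq_bigr => l _; case: ifP => // /negbT; rewrite -leqNgt => h.
by rewrite bin_small // mulr0n.
Qed.

Lemma Dsum n (i : 'I_n) (g : {poly R0}) :
  \sum_(l < n) ((Dm R0 n) i l)%:P * ((1 + tt) ^+ l - g) = tt ^+ i - ((i : nat) == 0%N)%:R * g.
Proof.
have E1 : forall l : 'I_n, ((Dm R0 n) i l)%:P = ((-1) ^+ (i - l) *+ 'C(i, l) : {poly R0}).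
  by move=> l; rewrite mxE rmorphMn rmorphXn rmorphN1.
under eq_bigr => l _ do rewrite E1 mulrBr !mulrnAl.
rewrite sumrB; congr (_ - _).
  rewrite (sum_binC _ _ _ (fun l => (-1) ^+ (i - l) * (1 + tt) ^+ l)) ?ltn_ord //.
  by rewrite -exprDn addrA addNr add0r.
under eq_bigr => l _ do rewrite -mulrnAl.
rewrite -mulr_suml; congr (_ * _).
rewrite (sum_binC _ _ _ (fun l => (-1) ^+ (i - l) : {poly R0})) ?ltn_ord //.
rewrite -expr0n [RHS](_ : _ = ((-1 : {poly R0}) + 1) ^+ i); last by rewrite addNr.
rewrite exprDn.
by apply: eq_bigr => l _; rewrite expr1n mulr1.
Qed.

Theorem theorem1 (k r n : nat) (hk : (1 <= k)%N) (hr : (r < k)%N) (hn : (1 <= n)%N) :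
  'X^r * \det (Amat k r n) = Fib k (k * n + r).
Proof.
case: n hn => // n' _.
pose Nt := n'.+2.
pose w := PP Nt (r%:Z + 1 - k%:Z).
pose c := (1 + tt) ^+ (k - 1 - r).
pose e := w * hh k.
have Hcw : cg Nt (c * w) 1.
  eapply cg_trans; first exact: PPa.
  have -> : (r%:Z + 1 - k%:Z + (k - 1 - r)%N%:Z = 0) by lia.
  exact: PP0.
have e0 : e`_0 = 1.
  rewrite coef0M /w coef_poly [(0 < Nt)%N]/= gbin0 -horner_coef0 /hh !hornerE.
  by rewrite expr1n.
have [g Hg] := @ser_inv _ Nt e e0.
have g0 : g`_0 = 1 by have := Hg 0%N isT; rewrite coef0M e0 mulr1 coef1.
pose a (i : 'I_n'.+1) : {poly R0} :=
  (('X : R0) ^+ k)%:P * PP Nt (i%:Z - k%:Z + 1 + r%:Z) + QQ Nt (i%:Z + 1 + r%:Z).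
have HA : Amat k r n'.+1 = rowmat a.
  apply/matrixP => i j; rewrite !mxE coefD coefCM !coef_poly leqW ?ltn_ord //.
  have -> : (j%:Z + 1 = (j.+1)%:Z) by rewrite -[(j.+1)%N]addn1 PoszD.
  by rewrite mulrC.
have Hrow : forall i : 'I_n'.+1, cg Nt (tt * a i) ((1 + tt) ^+ i * e - 1).
  move=> i.
  have H1 : cg Nt (PP Nt (i%:Z - k%:Z + 1 + r%:Z)) ((1 + tt) ^+ i * w).
    apply: cg_sym; eapply cg_trans; first exact: PPa.
    by have -> : (r%:Z + 1 - k%:Z + i%:Z = i%:Z - k%:Z + 1 + r%:Z) by lia.
  have H2 : cg Nt (PP Nt (i%:Z + 1 + r%:Z)) ((1 + tt) ^+ (i + k) * w).
    apply: cg_sym; eapply cg_trans; first exact: PPa.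
    by have -> : (r%:Z + 1 - k%:Z + (i + k)%N%:Z = i%:Z + 1 + r%:Z) by lia.
  apply: (@cg_trans _ _ _ ((('X : R0) ^+ k)%:P * tt * PP Nt (i%:Z - k%:Z + 1 + r%:Z)
            + tt * QQ Nt (i%:Z + 1 + r%:Z))).
    by apply: cg_eq; rewrite /a; ring.
  eapply cg_trans; first (apply: cgD; [apply: cgl; exact: H1 | exact: QQ1]).
  eapply cg_trans; first (apply: cgD; [exact: cg_refl | apply: cgD; [exact: H2 | exact: cg_refl]]).
  by apply: cg_eq; rewrite /e /hh exprD; ring.
have Hrow2 : forall i, cg Nt (tt * (a i * g)) ((1 + tt) ^+ i - g).
  move=> i; rewrite mulrA; eapply cg_trans; first (apply: cgMr; exact: Hrow i).
  apply: (@cg_trans _ _ _ ((1 + tt) ^+ i * (g * e) - g)); first by apply: cg_eq; ring.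
  eapply cg_trans; first (apply: cgD; [apply: cgl; exact: Hg | exact: cg_refl]).
  by apply: cg_eq; rewrite mulr1.
have HE : Dm R0 n'.+1 *m (rowmat a *m Tz R0 n'.+1 g) =
    \matrix_(i, j) (((j.+1 == i)%:R - (i == 0%N :> nat)%:R * g`_j.+1) : R0).
  rewrite rowmat_Tz mul_rowmat; apply/matrixP => i j; rewrite !mxE.
  set SUM := \sum_l _.
  have -> : SUM`_j = (tt * SUM)`_j.+1 by rewrite coefXM.
  rewrite /SUM mulr_sumr.
  have Hs : cg Nt (\sum_l tt * ((Dm R0 n'.+1 i l)%:P * (a l * g)))
                 (\sum_l (Dm R0 n'.+1 i l)%:P * ((1 + tt) ^+ l - g)).
    by apply: cg_sum => l; rewrite mulrCA; apply: cgl; exact: Hrow2.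
  rewrite Hs; last exact: (ltn_ord j).
  rewrite (@Dsum _ i g) coefB coefXn.
  by congr (_ - _); rewrite !mulr_natl coefMn.
have HS : cg Nt (xc ^+ r * g) (Sr k Nt r).
  apply: cg_sym.
  apply: (@cg_trans _ _ _ (Sr k Nt r * (g * e))).
    apply: cg_sym; eapply cg_trans; first (apply: cgl; exact: Hg).
    by apply: cg_eq; rewrite mulr1.
  apply: (@cg_trans _ _ _ (g * w * (Sr k Nt r * hh k))).
    by apply: cg_eq; rewrite /e; ring.
  eapply cg_trans; first (apply: cgl; exact: (@SrE k Nt hk r hr)).
  apply: (@cg_trans _ _ _ (xc ^+ r * g * (c * w))).
    by apply: cg_eq; rewrite /c; ring.
  eapply cg_trans; first (apply: cgl; exact: Hcw).
  by apply: cg_eq; rewrite mulr1.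
have Hdet : \det (rowmat a) = \det (Dm R0 n'.+1 *m (rowmat a *m Tz R0 n'.+1 g)).
  by rewrite !det_mulmx det_Dm det_Tz // mul1r mulr1.
rewrite HA Hdet HE det_E.
have := HS n'.+1 (ltnSn _); rewrite -rmorphXn coefCM coef_poly ltnSn => HSn.
by rewrite mulrCA HSn mulrA -exprMn mulrNN mulr1 expr1n mul1r.
Qed.
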